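(* Let $\mathbb{F}$ be a field of odd characteristic $p>2$ that is algebraic over $\mathbb{F}_p$. Then \[ SD(\mathbb{F}) = \begin{cases} \operatorname{Aut}(\mathbb{F}) & \text{if } \mathbb{F} \neq \mathbb{F}_5, \\ \{ \mathrm{id}, \ w \mapsto w^3 \} \cong \mathbb{Z}/2\mathbb{Z} & \text{if } \mathbb{F} = \mathbb{F}_5. \end{cases} \]
   Context: For fields $\mathbb{F},\widetilde{\mathbb{F}}$, a map $f:\mathbb{F}\to\widetilde{\mathbb{F}}$ is called an SD-map if for all $x\neq y$ in $\mathbb{F}$ one has $f(x)\neq f(y)$ and \[ f\left(\frac{x+y}{x-y}\right)=\frac{f(x)+f(y)}{f(x)-f(y)}. \] For a field $\mathbb{F}$, $SD(\mathbb{F})$ denotes the set of surjective SD-maps $f:\mathbb{F}\to\mathbb{F}$ (a group under composition). $\operatorname{Aut}(\mathbb{F})$ is the group of field automorphisms of $\mathbb{F}$, and $\mathbb{F}_q$ denotes the finite field with $q$ elements. *)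

(* Defs.v *)
From HB Require Import structures.
From mathcomp Require Import all_boot all_order all_algebra.
Set Implicit Arguments. Unset Strict Implicit. Unset Printing Implicit Defensive.
Import GRing.Theory.
Local Open Scope ring_scope.

Definition SD_map (F G : fieldType) (f : F -> G) : Prop :=
  forall x y : F, x <> y ->
    f x <> f y /\ f ((x + y) / (x - y)) = (f x + f y) / (f x - f y).

Definition in_SD (F : fieldType) (f : F -> F) : Prop :=
  SD_map f /\ (forall z : F, exists x : F, f x = z).

Definition field_aut (F : fieldType) (f : F -> F) : Prop :=
  [/\ (forall x y, f (x + y) = f x + f y),
      (forall x y, f (x * y) = f x * f y),
      f 1 = 1 & bijective f].

(* F is algebraic over its prime field: every element is a root of a nonzero
   polynomial with coefficients in the prime subfield (images of integers). *)
Definition algebraic_over_prime_field (F : fieldType) : Prop :=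
  forall x : F, exists q : {poly int},
    map_poly (intr : int -> F) q != 0 /\ root (map_poly (intr : int -> F) q) x.

Definition is_F5 (F : fieldType) : Prop :=
  exists s : seq F, [/\ uniq s, size s = 5%N & forall x : F, x \in s].

(* Main.v *)
Require Import Defs.
From mathcomp Require Import all_boot all_order all_algebra.
From mathcomp Require Import ring.
From Stdlib Require Import Classical FunctionalExtensionality.
Import GRing.Theory.
Local Open Scope ring_scope.
Set Implicit Arguments. Unset Strict Implicit.

Lemma two_neq0 (F : fieldType) (p : nat) (hp : p \in [pchar F]) (hp2 : (2 < p)%N) : (2%:R : F) != 0.
Proof.
apply/negP => /eqP h2.
have h : (2%N \in [pchar F]) by rewrite inE h2 eqxx.
have := pcharf_eq hp; move/(_ 2%N); rewrite h.
move/esym; rewrite inE => /eqP h'. by rewrite -h' in hp2.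
Qed.

Lemma cross (F : fieldType) (a b c d : F) : b != 0 -> d != 0 -> a / b = c / d -> a * d = c * b.
Proof. by move=> hb hd /eqP; rewrite eqr_div // => /eqP. Qed.

Lemma one_neq_m1 (F : fieldType) : (2%:R : F) != 0 -> (1 : F) != -1.
Proof.
move=> h2; apply/negP => /eqP h; move: h2; have -> : (2%:R : F) = 1 - (-1) by ring.
by rewrite -h subrr eqxx.
Qed.

Section S.
End S.

Lemma SD_f0 (F : fieldType) (f : F -> F) (h2 : (2%:R : F) != 0) (hf : SD_map f) : f 0 = 0.
Proof.
apply/eqP/negPn/negP => ha.
have h10 : (1 : F) <> 0 by apply/eqP; exact: oner_neq0.
have hm10 : (-1 : F) <> 0 by apply/eqP; rewrite oppr_eq0 oner_neq0.
have h1m1 : (-1 : F) <> 1 by apply/eqP; rewrite eq_sym one_neq_m1.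
have [n1 e1] := hf 1 0 h10.
have [n2 e2] := hf (-1) 0 hm10.
have [n3 _] := hf (-1) 1 h1m1.
move: e1 e2; rewrite !addr0 !subr0 divr1 divff ?oppr_eq0 ?oner_neq0 // => e1 e2.
have u1 : f 1 - f 0 != 0 by rewrite subr_eq0; apply/eqP.
have u2 : f (-1) - f 0 != 0 by rewrite subr_eq0; apply/eqP.
have := cross u1 u2 (etrans (esym e1) e2).
move=> e.
have : 2%:R * f 0 * (f (-1) - f 1) = 0.
  have -> : 2%:R * f 0 * (f (-1) - f 1) = (f 1 + f 0) * (f (-1) - f 0) - (f (-1) + f 0) * (f 1 - f 0) by ring.
  by rewrite e subrr.
apply/eqP; rewrite !mulf_eq0 negb_or negb_or h2 ha /= subr_eq0; apply/eqP; exact: n3.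
Qed.

Lemma SD_inj (F : fieldType) (f : F -> F) (hf : SD_map f) x y : f x = f y -> x = y.
Proof. move=> e; apply: NNPP => ne; by case: (hf x y ne). Qed.

Lemma SD_nz (F : fieldType) (f : F -> F) (h2 : (2%:R : F) != 0) (hf : SD_map f) x : x != 0 -> f x != 0.
Proof.
move=> hx; apply/eqP => e; move: hx; rewrite -(SD_f0 h2 hf) in e.
by rewrite (SD_inj hf e) eqxx.
Qed.

Lemma SD_f1 (F : fieldType) (f : F -> F) (h2 : (2%:R : F) != 0) (hf : SD_map f) : f 1 = 1.
Proof.
have h10 : (1 : F) <> 0 by apply/eqP; exact: oner_neq0.
have [n1 e1] := hf 1 0 h10.
move: e1; rewrite addr0 subr0 divr1 (SD_f0 h2 hf) addr0 subr0 divff //.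
exact: SD_nz (oner_neq0 _).
Qed.

Lemma SD_key (F : fieldType) (f : F -> F) (h2 : (2%:R : F) != 0) (hf : SD_map f) r :
  r != 1 -> f ((1 + r) / (1 - r)) = (1 + f r) / (1 - f r).
Proof.
move=> hr; have hr' : (1 : F) <> r by apply/eqP; rewrite eq_sym.
have [_ e] := hf 1 r hr'; by rewrite e (SD_f1 h2 hf).
Qed.

Lemma SD_div (F : fieldType) (f : F -> F) (h2 : (2%:R : F) != 0) (hf : SD_map f) x y :
  x != 0 -> f (y / x) = f y / f x.
Proof.
move=> hx.
have fx : f x != 0 := SD_nz h2 hf hx.
case: (eqVneq y x) => [->|hyx]; first by rewrite !divff // SD_f1.
set r := y / x.
have hr : r != 1.
  apply/negP => /eqP e; move: hyx; have -> : y = r * x by rewrite /r mulrVK ?unitfE.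
  by rewrite e mul1r eqxx.
have hxy : x - y != 0 by rewrite subr_eq0 eq_sym.
have hxy' : x <> y by apply/eqP; rewrite eq_sym.
have [nf e] := hf x y hxy'.
have fxy : f x - f y != 0 by rewrite subr_eq0; apply/eqP.
have h1r : 1 - r != 0 by rewrite subr_eq0 eq_sym.
have e1 : (x + y) / (x - y) = (1 + r) / (1 - r).
  by rewrite /r; field; rewrite hx hxy.
rewrite e1 (SD_key h2 hf hr) in e.
set s := f y / f x.
have h1s : 1 - s != 0.
  rewrite subr_eq0 eq_sym /s; apply/negP => /eqP e'.
  have e'' : f y = f x by rewrite -[f y](divfK fx) e' mul1r.
  by move: fxy; rewrite e'' subrr eqxx.
have e2 : (f x + f y) / (f x - f y) = (1 + s) / (1 - s).
  by rewrite /s; field; rewrite fx fxy.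
rewrite e2 in e.
have h1fr : 1 - f r != 0.
  rewrite subr_eq0 eq_sym -(SD_f1 h2 hf); apply/eqP => e'.
  by move: hr; rewrite (SD_inj hf e') eqxx.
have := cross h1fr h1s e => e3.
have : 2%:R * (f r - s) = 0.
  have -> : 2%:R * (f r - s) = (1 + f r) * (1 - s) - (1 + s) * (1 - f r) by ring.
  by rewrite -e3 subrr.
move/eqP; rewrite mulf_eq0 (negbTE h2) /= subr_eq0 => /eqP //.
Qed.

Lemma SD_mul (F : fieldType) (f : F -> F) (h2 : (2%:R : F) != 0) (hf : SD_map f) x y :
  f (x * y) = f x * f y.
Proof.
case: (eqVneq y 0) => [->|hy]; first by rewrite !mulr0 (SD_f0 h2 hf) mulr0.
have := SD_div h2 hf (x * y) hy; rewrite mulfK // => ->.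
by rewrite divfK // SD_nz.
Qed.

Lemma SD_inv (F : fieldType) (f : F -> F) (h2 : (2%:R : F) != 0) (hf : SD_map f) x :
  f (x^-1) = (f x)^-1.
Proof.
case: (eqVneq x 0) => [->|hx]; first by rewrite invr0 (SD_f0 h2 hf) invr0.
by rewrite -div1r (SD_div h2 hf _ hx) (SD_f1 h2 hf) div1r.
Qed.

Lemma SD_m1 (F : fieldType) (f : F -> F) (h2 : (2%:R : F) != 0) (hf : SD_map f) :
  f (-1) = -1.
Proof.
have e : f (-1) * f (-1) = 1 by rewrite -SD_mul // mulrNN mulr1 SD_f1.
have : (f (-1) - 1) * (f (-1) + 1) = 0.
  have -> : (f (-1) - 1) * (f (-1) + 1) = f (-1) * f (-1) - 1 by ring.
  by rewrite e subrr.
move/eqP; rewrite mulf_eq0 => /orP [|]; last by rewrite addr_eq0 => /eqP.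
rewrite subr_eq0 -{2}(SD_f1 h2 hf) => /eqP e'.
by move: (one_neq_m1 h2); rewrite (SD_inj hf e') eqxx.
Qed.

Lemma SD_opp (F : fieldType) (f : F -> F) (h2 : (2%:R : F) != 0) (hf : SD_map f) x :
  f (- x) = - f x.
Proof. by rewrite -mulN1r SD_mul // SD_m1 // mulN1r. Qed.

Lemma SD_H (F : fieldType) (f : F -> F) (h2 : (2%:R : F) != 0) (hf : SD_map f) a b :
  f (a + b) * (f a - f b) = f (a - b) * (f a + f b).
Proof.
case: (eqVneq a b) => [->|hab]; first by rewrite !subrr (SD_f0 h2 hf) mulr0 mul0r.
have hab' : a <> b by apply/eqP.
have [nf e] := hf a b hab'.
have hs : a - b != 0 by rewrite subr_eq0.
rewrite (SD_div h2 hf _ hs) in e.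
rewrite [RHS]mulrC; apply: (cross _ _ e); first exact: SD_nz.
by rewrite subr_eq0; apply/eqP.
Qed.

Definition Nv (F : fieldType) (v : F * F) := (v.1 + v.2, v.2 - v.1).
Definition Nv' (F : fieldType) (v : F * F) := (v.1 - v.2, v.1 + v.2).
Definition Tv (F : fieldType) (c : F) (v : F * F) := (c * v.1, v.2).
Definition sc (F : fieldType) (l : F) (v : F * F) := (l * v.1, l * v.2).
Definition Fv (F : fieldType) (f : F -> F) (v : F * F) := (f v.1, f v.2).

Definition good (F : fieldType) (f : F -> F) (M M' : F * F -> F * F) :=
  [/\ (forall v, v != (0, 0) -> M v != (0, 0)),
      (forall l v, M' (sc l v) = sc l (M' v)) &
      (forall v, v != (0, 0) -> exists l, l != 0 /\ Fv f (M v) = sc l (M' (Fv f v)))].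

Lemma sc_sc (F : fieldType) (l1 l2 : F) v : sc l1 (sc l2 v) = sc (l1 * l2) v.
Proof. by rewrite /sc /= !mulrA. Qed.

Lemma good_comp (F : fieldType) (f : F -> F) M1 M1' M2 M2' :
  good f M1 M1' -> good f M2 M2' -> good f (M1 \o M2) (M1' \o M2').
Proof.
move=> [n1 l1 r1] [n2 l2 r2]; split => /=.
- by move=> v hv; apply: n1; apply: n2.
- by move=> l v; rewrite l2 l1.
- move=> v hv.
  have [k2 [hk2 e2]] := r2 v hv.
  have [k1 [hk1 e1]] := r1 _ (n2 v hv).
  exists (k1 * k2); split; first by rewrite mulf_neq0.
  by rewrite e1 e2 l1 sc_sc.
Qed.

Lemma pair_nz (F : fieldType) (x y : F) : ((x, y) != (0, 0)) = (x != 0) || (y != 0).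
Proof. by rewrite xpair_eqE negb_and. Qed.

Lemma prop_vec (F : fieldType) (u w : F * F) : u != (0, 0) -> w != (0, 0) ->
  u.1 * w.2 = w.1 * u.2 -> exists l, l != 0 /\ u = sc l w.
Proof.
case: u => u1 u2; case: w => w1 w2; rewrite !pair_nz /= /sc /= => hu hw e.
case: (eqVneq w2 0) => [hw2|hw2].
  rewrite hw2 eqxx orbF in hw; rewrite hw2 mulr0 in e.
  have hu2 : u2 = 0 by move/esym/eqP: e; rewrite mulf_eq0 (negbTE hw) /= => /eqP.
  rewrite hu2 eqxx orbF in hu.
  exists (u1 / w1); split; first by rewrite mulf_neq0 // invr_eq0.
  by rewrite hw2 hu2 mulr0 divfK.
exists (u2 / w2); split.
  rewrite mulf_neq0 ?invr_eq0 //; apply/negP => /eqP hu2.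
  move: e; rewrite hu2 mulr0 => /eqP; rewrite mulf_eq0 (negbTE hw2) orbF => /eqP hu1.
  by move: hu; rewrite hu1 hu2 eqxx.
congr pair; last by rewrite divfK.
by rewrite -[u1](mulfK hw2) e; field.
Qed.

Lemma Fv_nz (F : fieldType) (f : F -> F) (h2 : (2%:R : F) != 0) (hf : SD_map f) v :
  v != (0, 0) -> Fv f v != (0, 0).
Proof.
case: v => x y; rewrite /Fv /= !pair_nz => /orP [h|h]; apply/orP.
  by left; apply: SD_nz. by right; apply: SD_nz.
Qed.

Lemma good_N (F : fieldType) (f : F -> F) (h2 : (2%:R : F) != 0) (hf : SD_map f) :
  good f (@Nv F) (@Nv F).
Proof.
have nN : forall v : F * F, v != (0, 0) -> Nv v != (0, 0).
  case=> x y; rewrite /Nv /= !pair_nz /= => h; apply: contraTT h => /norP [/negPn/eqP e1 /negPn/eqP e2].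
  have ey : y = 0.
    have : 2%:R * y = 0.
      by rewrite (_ : 2%:R * y = (x + y) + (y - x)); [rewrite e1 e2 addr0 | ring].
    by move/eqP; rewrite mulf_eq0 (negbTE h2) /= => /eqP.
  have ex : x = 0 by move: e1; rewrite ey addr0.
  by rewrite ex ey eqxx.
split => //.
- by move=> l [x y]; rewrite /Nv /sc /=; congr pair; ring.
- move=> v hv; apply: prop_vec; first exact: Fv_nz (nN _ hv).
    exact: nN (Fv_nz h2 hf hv).
  case: v hv => x y _; rewrite /Nv /Fv /=.
  have := SD_H h2 hf y x; rewrite addrC => ->; ring.
Qed.

Lemma good_N' (F : fieldType) (f : F -> F) (h2 : (2%:R : F) != 0) (hf : SD_map f) :
  good f (@Nv' F) (@Nv' F).
Proof.
have nN : forall v : F * F, v != (0, 0) -> Nv' v != (0, 0).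
  case=> x y; rewrite /Nv' /= !pair_nz /= => h; apply: contraTT h => /norP [/negPn/eqP e1 /negPn/eqP e2].
  have ex : x = 0.
    have : 2%:R * x = 0.
      by rewrite (_ : 2%:R * x = (x - y) + (x + y)); [rewrite e1 e2 addr0 | ring].
    by move/eqP; rewrite mulf_eq0 (negbTE h2) /= => /eqP.
  have ey : y = 0 by move: e2; rewrite ex add0r.
  by rewrite ex ey eqxx.
split => //.
- by move=> l [x y]; rewrite /Nv' /sc /=; congr pair; ring.
- move=> v hv; apply: prop_vec; first exact: Fv_nz (nN _ hv).
    exact: nN (Fv_nz h2 hf hv).
  case: v hv => x y _; rewrite /Nv' /Fv /=.
  have := SD_H h2 hf x y => e; rewrite -e; ring.
Qed.

Lemma good_T (F : fieldType) (f : F -> F) (h2 : (2%:R : F) != 0) (hf : SD_map f) c :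
  c != 0 -> good f (Tv c) (Tv (f c)).
Proof.
move=> hc; split.
- case=> x y; rewrite /Tv /= !pair_nz => /orP [h|h]; apply/orP; [left|right] => //.
  by rewrite mulf_neq0.
- by move=> l [x y]; rewrite /Tv /sc /=; congr pair; ring.
- move=> v _; exists 1; split; first exact: oner_neq0.
  case: v => x y; rewrite /Tv /Fv /sc /= !mul1r SD_mul //.
Qed.

Definition cf (F : fieldType) (k : F) := - ((1 + k) / (1 - k)) ^+ 2.
Definition Wm (F : fieldType) (k c : F) :=
  @Nv F \o Tv k \o @Nv' F \o Tv c \o @Nv F \o Tv (- k) \o @Nv' F.
Definition al (F : fieldType) (k : F) := - (4%:R * k * (k + 1)) / (1 - k).
Definition be (F : fieldType) (k : F) := - (8%:R * k * (k ^+ 2 + 1)) / (1 - k) ^+ 2.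

Lemma Wform (F : fieldType) (k X Y : F) : 1 - k != 0 ->
  Wm k (cf k) (X, Y) = (al k * X + be k * Y, al k * Y).
Proof.
move=> hk; rewrite /Wm /cf /al /be /Nv /Nv' /Tv /=.
by congr pair; field; rewrite hk.
Qed.

Lemma good_W (F : fieldType) (f : F -> F) (h2 : (2%:R : F) != 0) (hf : SD_map f) k c :
  k != 0 -> c != 0 ->
  good f (Wm k c) (@Nv F \o Tv (f k) \o @Nv' F \o Tv (f c) \o @Nv F \o Tv (f (- k)) \o @Nv' F).
Proof.
move=> hk hc; rewrite /Wm.
have gN := good_N h2 hf; have gN' := good_N' h2 hf.
repeat apply: good_comp => //; apply: good_T => //.
by rewrite oppr_eq0.
Qed.

Lemma SD_shift (F : fieldType) (f : F -> F) (h2 : (2%:R : F) != 0) (hf : SD_map f) (b : F) :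
  b != 0 -> b != 1 -> b != -1 -> b ^+ 2 != -1 ->
  exists2 s, s != 0 & forall x, f (x + s) = f x + f s.
Proof.
move=> hb0 hb1 hbm1 hbi.
have h1b : 1 - b != 0 by rewrite subr_eq0 eq_sym.
have hb1' : b + 1 != 0 by rewrite addr_eq0.
have hb2 : b ^+ 2 + 1 != 0 by rewrite addr_eq0.
have h4 : (4%:R : F) != 0.
  by rewrite (_ : 4%:R = 2%:R * 2%:R) ?mulf_neq0 // -natrM.
have h8 : (8%:R : F) != 0.
  by rewrite (_ : 8%:R = 4%:R * 2%:R) ?mulf_neq0 // -natrM.
have hal : al b != 0.
  by rewrite /al mulf_neq0 ?invr_eq0 // oppr_eq0 !mulf_neq0.
have hbe : be b != 0.
  by rewrite /be mulf_neq0 ?invr_eq0 ?expf_neq0 // oppr_eq0 !mulf_neq0.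
have hc : cf b != 0.
  by rewrite /cf oppr_eq0 expf_neq0 // mulf_neq0 ?invr_eq0 // addrC.
have [_ _ gW] := good_W h2 hf hb0 hc.
have hfb1 : 1 - f b != 0.
  rewrite subr_eq0 -(SD_f1 h2 hf); apply/eqP => e.
  by move: hb1; rewrite (SD_inj hf e) eqxx.
have efc : f (cf b) = cf (f b).
  by rewrite /cf SD_opp // expr2 SD_mul // SD_key // -expr2.
have key : forall x, f (x + be b / al b) = f x + be (f b) / al (f b).
  move=> x.
  have hv : (x, 1) != (0, 0 : F) by rewrite pair_nz oner_neq0 orbT.
  have [l [hl e]] := gW _ hv.
  move: e; rewrite -/(Wm b (cf b)) Wform // /Fv /= (SD_f1 h2 hf) efc (SD_opp h2 hf).
  have Wf := Wform (f x) 1 hfb1; rewrite /Wm /= in Wf.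
  rewrite Wf /sc /= => [[e1 e2]].
  rewrite !mulr1 in e1 e2.
  have fal : f (al b) != 0 by apply: SD_nz.
  have hal' : al (f b) != 0 by apply: contraNneq fal => e; rewrite e2 e mulr0.
  have : f (al b) * f (x + be b / al b) = f (al b) * (f x + be (f b) / al (f b)).
    rewrite -(SD_mul h2 hf) mulrDr [al b * (_ / _)]mulrC divfK // e1 e2; field; done.
  by move/mulfI; apply.
exists (be b / al b); first by rewrite mulf_neq0 ?invr_eq0.
move=> x; rewrite key; congr (_ + _).
by have := key 0; rewrite add0r (SD_f0 h2 hf) add0r.
Qed.

Lemma SD_additive (F : fieldType) (f : F -> F) (h2 : (2%:R : F) != 0) (hf : SD_map f) (b : F) :
  b != 0 -> b != 1 -> b != -1 -> b ^+ 2 != -1 ->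
  forall x y, f (x + y) = f x + f y.
Proof.
move=> hb0 hb1 hbm1 hbi x y.
have [s hs key] := SD_shift h2 hf hb0 hb1 hbm1 hbi.
case: (eqVneq y 0) => [->|hy]; first by rewrite (SD_f0 h2 hf) !addr0.
set l := y / s.
have hl : l != 0 by rewrite mulf_neq0 ?invr_eq0.
have -> : x + y = l * (x / l + s) by rewrite /l; field; rewrite hs hy.
rewrite (SD_mul h2 hf) key mulrDr -!(SD_mul h2 hf) mulrC divfK //.
by rewrite /l divfK.
Qed.

Definition goodb (F : fieldType) (b : F) := [/\ b != 0, b != 1, b != -1 & b ^+ 2 != -1].

Lemma SD_aut (F : fieldType) (f : F -> F) (h2 : (2%:R : F) != 0) :
  in_SD f -> (exists b : F, goodb b) -> field_aut f.
Proof.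
move=> [hf hs] [b [hb0 hb1 hbm1 hbi]]; split.
- move=> x y; have e := SD_additive h2 hf hb0 hb1 hbm1 hbi x y; exact e.
- move=> x y; have e := SD_mul h2 hf x y; exact e.
- have e := SD_f1 h2 hf; exact e.
have hs' : forall z, exists x, f x == z by move=> z; have [x e] := hs z; exists x; apply/eqP.
exists (fun z => xchoose (hs' z)).
- move=> x; apply: (SD_inj hf); exact/eqP/(xchooseP (hs' (f x))).
- move=> z; exact/eqP/(xchooseP (hs' z)).
Qed.

Lemma aut_SD (F : fieldType) (f : F -> F) : field_aut f -> in_SD f.
Proof.
move=> [fD fM f1 [g fg gf]].
have f0 : f 0 = 0.
  have := fD 0 0; rewrite addr0 => e.
  by apply: (addrI (f 0)); rewrite addr0 -e.
have fN : forall x, f (- x) = - f x.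
  by move=> x; apply/eqP; rewrite -addr_eq0 -fD addNr f0.
have fB : forall x y, f (x - y) = f x - f y by move=> x y; rewrite fD fN.
have fnz : forall x, x != 0 -> f x != 0.
  move=> x hx; apply/eqP => e.
  by move: (oner_neq0 F); rewrite -f1 -(divff hx) fM e mul0r eqxx.
have fV : forall x, f (x^-1) = (f x)^-1.
  move=> x; case: (eqVneq x 0) => [->|hx]; first by rewrite invr0 f0 invr0.
  apply: (mulfI (fnz _ hx)); rewrite -fM !divff ?fnz //.
have finj : forall x y, x <> y -> f x <> f y.
  move=> x y ne e; apply: ne; apply/eqP; rewrite -subr_eq0; apply/negPn/negP => h.
  by move: (fnz _ h); rewrite fB e subrr eqxx.
split.
- move=> x y ne; split; first exact: finj.
  by rewrite fM fV fD fB.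
- by move=> z; exists (g z).
Qed.

Lemma small_field (F : fieldType) : ~ (exists b : F, goodb b) ->
  forall x : F, [\/ x = 0, x = 1, x = -1 | x ^+ 2 = -1].
Proof.
move=> nb x; apply: NNPP => h; apply: nb; exists x; split; apply/eqP => e; apply: h.
by constructor 1. by constructor 2. by constructor 3. by constructor 4.
Qed.

Lemma F5_list (F : fieldType) (h2 : (2%:R : F) != 0) (a : F) : a ^+ 2 = -1 ->
  uniq [:: 0; 1; -1; a; -a].
Proof.
move=> ha.
have h1m1 := one_neq_m1 h2.
have a0 : a != 0 by apply/eqP => e; move: ha; rewrite e expr0n /= => /esym/eqP; rewrite oppr_eq0 oner_eq0.
have a1 : a != 1 by apply/eqP => e; move: ha; rewrite e expr1n => /eqP; rewrite (negbTE h1m1).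
have am1 : a != -1 by apply/eqP => e; move: ha; rewrite e sqrrN expr1n => /eqP; rewrite (negbTE h1m1).
have aa : a != -a.
  apply/eqP => e; move: a0; have : 2%:R * a = 0 by rewrite mulr2n mulrDl mul1r {1}e addNr.
  by move/eqP; rewrite mulf_eq0 (negbTE h2) /= => ->.
rewrite /= !inE !negb_or.
rewrite eq_sym oner_neq0 eq_sym oppr_eq0 oner_neq0 eq_sym a0 eq_sym oppr_eq0 a0 /=.
rewrite h1m1 (eq_sym 1 a) a1 (eqr_oppLR 1 a) -(eqr_oppLR 1 a).
rewrite (eq_sym (-1) a) am1 eqr_opp (eq_sym 1 a) a1 aa.
by [].
Qed.

Lemma sq_cases (F : fieldType) (x a : F) : x ^+ 2 = a ^+ 2 -> x = a \/ x = - a.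
Proof.
move=> e; have : (x - a) * (x + a) = 0.
  have -> : (x - a) * (x + a) = x ^+ 2 - a ^+ 2 by ring.
  by rewrite e subrr.
move/eqP; rewrite mulf_eq0 subr_eq0 addr_eq0 => /orP [/eqP ->|/eqP ->]; by [left|right].
Qed.

Lemma F5_nogood (F : fieldType) (h2 : (2%:R : F) != 0) : is_F5 F -> ~ (exists b : F, goodb b).
Proof.
move=> [s [us ss hs]] [b [hb0 hb1 hbm1 hbi]].
have ut : uniq [:: 0; 1; -1; b; -b].
  have h1m1 := one_neq_m1 h2.
  have bb : b != -b.
    apply/eqP => e; move: hb0; have : 2%:R * b = 0 by rewrite mulr2n mulrDl mul1r {1}e addNr.
    by move/eqP; rewrite mulf_eq0 (negbTE h2) /= => ->.
  rewrite /= !inE !negb_or.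
  rewrite eq_sym oner_neq0 eq_sym oppr_eq0 oner_neq0 eq_sym hb0 eq_sym oppr_eq0 hb0 /=.
  rewrite h1m1 (eq_sym 1 b) hb1 -(eqr_oppLR 1 b) (eq_sym (-1) b) hbm1.
  by rewrite eqr_opp (eq_sym 1 b) hb1 bb.
have [_ eqts] := uniq_min_size ut (fun x _ => hs x) (eq_leq (etrans ss (esym (erefl 5%N)))).

have : b^-1 \in [:: 0; 1; -1; b; -b] by rewrite eqts.
rewrite !inE => /or4P [/eqP e|/eqP e|/eqP e|/orP [/eqP e|/eqP e]].
- by move: hb0; rewrite -invr_eq0 e eqxx.
- by move: hb1; rewrite -[b]invrK e invr1 eqxx.
- by move: hbm1; rewrite -[b]invrK e invrN invr1 eqxx.
- have : b ^+ 2 = 1 ^+ 2 by rewrite expr2 -{1}e mulVf // expr1n.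
  by case/sq_cases => e'; [move: hb1 | move: hbm1]; rewrite e' eqxx.
- move: hbi; rewrite expr2 -{1}[b]opprK -e mulNr mulVf // eqxx //.
Qed.

Lemma inv_SD (F : fieldType) (h2 : (2%:R : F) != 0)
  (hsq : forall x : F, [\/ x = 0, x ^+ 2 = 1 | x ^+ 2 = -1]) : in_SD (fun x : F => x^-1).
Proof.
split; last by move=> z; exists z^-1; rewrite invrK.
move=> x y ne; split; first by move=> e; apply: ne; exact: invr_inj e.
move: ne; case: (eqVneq x 0) => [->|hx] ne.
  have hy : y != 0 by apply/eqP => e; apply: ne; rewrite e.
  by rewrite invr0 !add0r; field; rewrite hy !oppr_eq0 oner_eq0 hy.
move: ne; case: (eqVneq y 0) => [->|hy] ne.
  by rewrite invr0 !addr0 !subr0; field; rewrite ?hx ?oppr_eq0 ?oner_eq0 ?hx.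
have hxy : x - y != 0 by rewrite subr_eq0; apply/eqP.
case: (eqVneq (x + y) 0) => [e|hpy].
  have -> : y = - x by apply/eqP; rewrite -addr_eq0 addrC e.
  by rewrite invrN subrr !(addrN, mul0r) invr0.
have hyx : y - x != 0 by rewrite subr_eq0 eq_sym; apply/eqP.
have -> : (x^-1 + y^-1) / (x^-1 - y^-1) = (x + y) / (y - x) by field; rewrite hx hy hyx.
rewrite invf_div; apply/eqP; rewrite eqr_div //; apply/eqP.
have hsum : x ^+ 2 + y ^+ 2 = 0.
  have nsq : x ^+ 2 != y ^+ 2.
    apply/eqP => /sq_cases [e|e]; first by move: hxy; rewrite e subrr eqxx.
    by move: hpy; rewrite e addNr eqxx.
  have h1m1 := one_neq_m1 h2.
  move: nsq; case: (hsq x) => [/eqP|->|->]; first by rewrite (negbTE hx).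
    case: (hsq y) => [/eqP|->|->]; first by rewrite (negbTE hy).
      by rewrite eqxx. by rewrite subrr.
  case: (hsq y) => [/eqP|->|->]; first by rewrite (negbTE hy).
    by rewrite addNr. by rewrite eqxx.
apply/eqP; rewrite -subr_eq0.
rewrite (_ : (x - y) * (y - x) - (x + y) * (x + y) = - (2%:R * (x ^+ 2 + y ^+ 2))); last by ring.
by rewrite hsum mulr0 oppr0.
Qed.

Unset Implicit Arguments.

Theorem theorem1p5 (F : fieldType) (p : nat) (hp : p \in [pchar F])
  (hp2 : (2 < p)%N) (halg : algebraic_over_prime_field F) :
  (~ is_F5 F -> forall f : F -> F, in_SD f <-> field_aut f) /\
  (is_F5 F -> forall f : F -> F,
      in_SD f <-> (f = id \/ f = (fun w => w ^+ 3))).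
Proof.
have h2 := two_neq0 hp hp2.
split.
- move=> nF5 f; split; last by move=> h; have E := aut_SD h; exact E.
  move=> hSD; case: (classic (exists b : F, goodb b)) => [hb|nb].
    have E := SD_aut h2 hSD hb; exact E.
  have hs := small_field nb.
  have nosq : forall x : F, x ^+ 2 <> -1.
    move=> a ha; apply: nF5; exists [:: 0; 1; -1; a; -a]; split => //.
      have E := F5_list h2 ha; exact E.
    move=> x; case: (hs x) => [->|->|->|hx]; rewrite !inE ?eqxx ?orbT //.
    by case: (sq_cases (etrans hx (esym ha))) => ->; rewrite eqxx ?orbT.
  have [hf _] := hSD.
  have fid : forall x, f x = x.
    move=> x; case: (hs x) => [->|->|->|hx].
    + have E := SD_f0 h2 hf; exact E.
    + have E := SD_f1 h2 hf; exact E.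
    + have E := SD_m1 h2 hf; exact E.
    + by case: (nosq x).
  have -> : f = id by apply: functional_extensionality.
  by split => //; exists id.
- move=> hF5 f; have hs := small_field (F5_nogood h2 hF5).
  split.
  + move=> [hf hsurj].
    case: (classic (exists a, a ^+ 2 = -1 /\ f a = - a)) => [[a [ha hfa]]|na].
    * right; apply: functional_extensionality => x.
      case: (hs x) => [->|->|->|hx].
      -- by rewrite (SD_f0 h2 hf) expr0n.
      -- by rewrite (SD_f1 h2 hf) expr1n.
      -- by rewrite (SD_m1 h2 hf) exprS sqrrN expr1n mulr1.
      -- case: (sq_cases (etrans hx (esym ha))) => ->.
         ++ by rewrite hfa exprS ha mulrN1.
         ++ by rewrite (SD_opp h2 hf) hfa opprK exprS sqrrN ha mulrN1 opprK.
    * left; apply: functional_extensionality => x.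
      case: (hs x) => [->|->|->|hx].
      -- have E := SD_f0 h2 hf; exact E.
      -- have E := SD_f1 h2 hf; exact E.
      -- have E := SD_m1 h2 hf; exact E.
      -- have : (f x) ^+ 2 = x ^+ 2.
           by rewrite expr2 -(SD_mul h2 hf) -expr2 hx (SD_m1 h2 hf).
         case/sq_cases => // e; exfalso; apply: na; exists x; split => //.
  + have hsq : forall x : F, [\/ x = 0, x ^+ 2 = 1 | x ^+ 2 = -1].
      move=> x; case: (hs x) => [->|->|->|hx].
      -- by constructor 1.
      -- by constructor 2; rewrite expr1n.
      -- by constructor 2; rewrite sqrrN expr1n.
      -- by constructor 3.
    case=> ->.
    * split; [move=> x y ne; split => // | by move=> z; exists z].
    * have -> : (fun w : F => w ^+ 3) = (fun w => w^-1).
        apply: functional_extensionality => x; case: (hsq x) => [->|hx|hx].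
        -- by rewrite expr0n invr0.
        -- have hx0 : x != 0 by apply/eqP => e; move: hx; rewrite e expr0n => /eqP; rewrite eq_sym oner_eq0.
           apply: (mulfI hx0); rewrite mulfV //.
           have -> : x * x ^+ 3 = (x ^+ 2) ^+ 2 by ring.
           by rewrite hx expr1n.
        -- have hx0 : x != 0.
             by apply/eqP => e; move: hx; rewrite e expr0n => /esym/eqP; rewrite oppr_eq0 oner_eq0.
           apply: (mulfI hx0); rewrite mulfV //.
           have -> : x * x ^+ 3 = (x ^+ 2) ^+ 2 by ring.
           by rewrite hx sqrrN expr1n.
      have E := inv_SD h2 hsq; exact E.
Qed.
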